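(* Let $n\equiv 3\pmod 4$ with $n>3$. Let $1\le r<m$, let $M_r\in\mathfrak{C}_r$, and suppose $\det\tilde M_r>0$. Then $$\max\{\det E: E\in\mathfrak{E}_m\}>(n-3)\max\{\det E: E\in\mathfrak{E}_{m-1}\}.$$
   Context: Fix an integer $n\equiv 3\pmod 4$, $n>3$. For $m\ge1$, $\mathfrak{C}_m$ is the set of symmetric positive definite $m\times m$ integer matrices $C=(c_{ij})$ with $c_{ii}=n$ and $c_{ij}\equiv n\pmod 4$ for all $i,j$ (a finite set, since positive definiteness forces $|c_{ij}|<n$ for $i\neq j$). Given a fixed $M_r\in\mathfrak{C}_r$, for $m\ge r$, $\mathfrak{E}_m$ is the set of $E_m\in\mathfrak{C}_m$ whose leading $r\times r$ submatrix is $M_r$. For a square matrix $C$ of order $m$, $\tilde C$ denotes the matrix obtained from $C$ by replacing its $(m,m)$ entry by $3$. *)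

(* Defs.v *)
From HB Require Import structures.
From mathcomp Require Import all_boot all_order all_algebra.
From mathcomp Require Import Rstruct.
From Stdlib Require Rdefinitions.
Set Implicit Arguments. Unset Strict Implicit. Unset Printing Implicit Defensive.
Import Order.TTheory GRing.Theory Num.Theory.
Local Open Scope ring_scope.

Definition posdef (m : nat) (C : 'M[int]_m) : Prop :=
  forall x : 'cV[Rdefinitions.R]_m, x != 0 ->
    0 < ((x^T *m map_mx (fun z : int => (z%:~R : Rdefinitions.R)) C *m x) ord0 ord0).

Definition in_frakC (n : int) (m : nat) (C : 'M[int]_m) : Prop :=
  [/\ C^T = C, posdef C,
      (forall i : 'I_m, C i i = n) &
      (forall i j : 'I_m, (C i j = n %[mod 4])%Z)].

Definition leading (m r : nat) (E : 'M[int]_m) (M : 'M[int]_r) : Prop :=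
  forall (i j : 'I_r) (i' j' : 'I_m),
    (i : nat) = i' -> (j : nat) = j' -> E i' j' = M i j.

Definition in_frakE (n : int) (r : nat) (Mr : 'M[int]_r) (m : nat) (E : 'M[int]_m) : Prop :=
  in_frakC n E /\ leading E Mr.

Definition tilde (m : nat) (C : 'M[int]_m) : 'M[int]_m :=
  \matrix_(i, j) if ((i : nat) == m.-1) && ((j : nat) == m.-1) then 3 else C i j.

(* Main.v *)
Require Import Defs.
From HB Require Import structures.
From mathcomp Require Import all_boot all_order all_algebra.
From mathcomp Require Import ring lra zify.
From mathcomp Require Import Rstruct fingroup perm.
From Stdlib Require Rdefinitions Classical_Prop.
Set Implicit Arguments. Unset Strict Implicit. Unset Printing Implicit Defensive.
Import Order.TTheory GRing.Theory Num.Theory.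
Local Open Scope ring_scope.

Definition wid k (i : 'I_k) : 'I_k.+1 := widen_ord (leqnSn k) i.
Definition lead (T : Type) k (M : 'M[T]_k.+1) : 'M[T]_k := \matrix_(i, j) M (wid i) (wid j).

Lemma lift_wid k (i : 'I_k) : lift ord_max i = wid i.
Proof. by apply: val_inj; rewrite [LHS]lift_max. Qed.

Lemma wid_neq k (i : 'I_k) : (wid i == ord_max) = false.
Proof. by apply/negbTE; rewrite -lift_wid eq_sym neq_lift. Qed.

Lemma liftm_neq k (i : 'I_k) : (lift ord_max i == ord_max) = false.
Proof. by rewrite lift_wid wid_neq. Qed.

Section Ring.
Variable R : comRingType.

Definition setlast k (M : 'M[R]_k.+1) c : 'M[R]_k.+1 :=
  \matrix_(i, j) if (i == ord_max) && (j == ord_max) then c else M i j.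

Lemma det_rowdelta k (B : 'M[R]_k) i j : row i B = delta_mx 0 j -> \det B = cofactor B i j.
Proof.
move/matrixP=> h; rewrite (expand_det_row B i) (bigD1 j) //= big1 ?addr0.
  by have := h 0 j; rewrite !mxE !eqxx /= => ->; rewrite mul1r.
move=> j' nj; have := h 0 j'; rewrite !mxE eqxx /= (negbTE nj) => ->.
by rewrite mul0r.
Qed.

Lemma cof_max k (M : 'M[R]_k.+1) : cofactor M ord_max ord_max = \det (lead M).
Proof.
rewrite /cofactor -signr_odd addnn odd_double expr0 mul1r; congr (\det _).
by apply/matrixP => i j; rewrite !mxE !lift_wid.
Qed.

Lemma det_setlast k (M : 'M[R]_k.+1) c :
  \det (setlast M c) = \det M + (c - M ord_max ord_max) * \det (lead M).
Proof.
pose D : 'M[R]_k.+1 := \matrix_(i, j) if i == ord_max then (j == ord_max)%:R else M i j.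
rewrite (@determinant_multilinear _ _ _ M D ord_max 1 (c - M ord_max ord_max)).
- rewrite mul1r; congr (_ + _ * _); rewrite (@det_rowdelta _ D ord_max ord_max) ?cof_max.
    by congr (\det _); apply/matrixP => i j; rewrite !mxE !wid_neq.
  by apply/matrixP => i j; rewrite !mxE eqxx /= (ord1 i) eqxx.
- apply/matrixP => i j; rewrite !mxE eqxx /=.
  by case: eqP => [->|_]; rewrite ?mulr1 ?mulr0 /= ?addr0 ?mul1r // addrC subrK.
- by apply/matrixP => i j; rewrite !mxE liftm_neq.
- by apply/matrixP => i j; rewrite !mxE liftm_neq.
Qed.
End Ring.

Section Real.
Variable R : realFieldType.

Definition qf k (M : 'M[R]_k) (x : 'cV[R]_k) : R := (x^T *m M *m x) ord0 ord0.
Definition pd k (M : 'M[R]_k) := forall x : 'cV_k, x != 0 -> 0 < qf M x.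
Definition res k (x : 'cV[R]_k.+1) : 'cV[R]_k := \col_i x (wid i) ord0.
Definition lcol k (M : 'M[R]_k.+1) : 'cV[R]_k := \col_i M (wid i) ord_max.
Definition ext k (y : 'cV[R]_k) (u : R) : 'cV[R]_k.+1 :=
  \col_i (if unlift ord_max i is Some j then y j ord0 else u).
Definition dot k (a b : 'cV[R]_k) : R := \sum_i a i ord0 * b i ord0.

Lemma qfE k (M : 'M[R]_k) x : qf M x = \sum_i \sum_j x i 0 * M i j * x j 0.
Proof.
rewrite /qf mxE exchange_big /=; apply: eq_bigr => i _.
rewrite mxE mulr_suml; apply: eq_bigr => j _; by rewrite !mxE.
Qed.

Lemma ext_wid k (y : 'cV[R]_k) u i : ext y u (wid i) 0 = y i 0.
Proof. by rewrite mxE -lift_wid liftK. Qed.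
Lemma ext_max k (y : 'cV[R]_k) u : ext y u ord_max 0 = u.
Proof. by rewrite mxE unlift_none. Qed.
Lemma res_ext k (y : 'cV[R]_k) u : res (ext y u) = y.
Proof. by apply/matrixP => i j; rewrite (ord1 j) mxE ext_wid. Qed.
Lemma ext_res k (x : 'cV[R]_k.+1) : x = ext (res x) (x ord_max 0).
Proof.
apply/matrixP => i j; rewrite (ord1 j) mxE; case: unliftP => [i' ->|->] //.
by rewrite lift_wid mxE.
Qed.

Lemma decomp k (M : 'M[R]_k.+1) x : M^T = M ->
  qf M x = qf (lead M) (res x) + 2 * x ord_max 0 * dot (lcol M) (res x)
           + M ord_max ord_max * x ord_max 0 ^+ 2.
Proof.
move=> sM; rewrite !qfE big_ord_recr /=.
under eq_bigr do rewrite big_ord_recr /=.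
rewrite big_ord_recr /= big_split /= /dot.
have sy i j : M i j = M j i by rewrite -{1}sM mxE.
set u := x ord_max 0.
have -> : \sum_i lcol M i ord0 * res x i ord0 = \sum_(i < k) M (widen_ord (leqnSn k) i) ord_max * x (widen_ord (leqnSn k) i) 0.
  by apply: eq_bigr => i _; rewrite !mxE.
have -> : \sum_(i < k) \sum_(j < k) res x i 0 * lead M i j * res x j 0 =
  \sum_(i < k) \sum_(i0 < k) x (widen_ord (leqnSn k) i) 0 *
        M (widen_ord (leqnSn k) i) (widen_ord (leqnSn k) i0) * x (widen_ord (leqnSn k) i0) 0.
  by apply: eq_bigr => i _; apply: eq_bigr => j _; rewrite !mxE.
set A := \sum_(i < k) \sum_(i0 < k) _.
set D := \sum_(i < k) M _ ord_max * _.
have -> : \sum_(i < k) x (widen_ord (leqnSn k) i) 0 * M (widen_ord (leqnSn k) i) ord_max * u = u * D.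
  by rewrite /D mulr_sumr; apply: eq_bigr => i _; ring.
have -> : \sum_(i < k) u * M ord_max (widen_ord (leqnSn k) i) * x (widen_ord (leqnSn k) i) 0 = u * D.
  by rewrite /D mulr_sumr; apply: eq_bigr => i _; rewrite sy; ring.
ring.
Qed.

Definition bl k (M : 'M[R]_k) (y z : 'cV[R]_k) : R := (y^T *m M *m z) ord0 ord0.

Lemma bl_sym k (M : 'M[R]_k) y z : M^T = M -> bl M z y = bl M y z.
Proof.
move=> sM; have e (N : 'M[R]_1) : N 0 0 = N^T 0 0 by rewrite mxE.
by rewrite /bl e !trmx_mul trmxK sM mulmxA.
Qed.

Lemma qf_add k (M : 'M[R]_k) y z : M^T = M ->
  qf M (y + z) = qf M y + 2 * bl M y z + qf M z.
Proof.
move=> sM; have aE (A B : 'M[R]_1) : (A + B) 0 0 = A 0 0 + B 0 0 by rewrite mxE.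
rewrite /qf [(y + z)^T]linearD /= !mulmxDl !mulmxDr !aE.
have := bl_sym y z sM; rewrite /bl => ->; ring.
Qed.

Lemma qf_scale k (M : 'M[R]_k) a y : qf M (a *: y) = a ^+ 2 * qf M y.
Proof.
have sE (A : 'M[R]_1) b : (b *: A) 0 0 = b * A 0 0 by rewrite mxE.
by rewrite /qf [(a *: y)^T]linearZ /= -scalemxAl -!scalemxAr !sE -scalemxAl sE mulrA.
Qed.

Lemma bl_scale k (M : 'M[R]_k) a y z : bl M y (a *: z) = a * bl M y z.
Proof. by rewrite /bl -scalemxAr mxE. Qed.

Lemma qf0 k (M : 'M[R]_k) : qf M 0 = 0.
Proof. by rewrite /qf trmx0 !mul0mx mxE. Qed.

Lemma lead_sym k (M : 'M[R]_k.+1) : M^T = M -> (lead M)^T = lead M.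
Proof. by move=> sM; apply/matrixP => i j; rewrite !mxE -{1}sM mxE. Qed.

Lemma bl_dot k (A : 'M[R]_k) y w a : A *m w = a -> bl A y w = dot a y.
Proof.
move=> h; rewrite /bl -mulmxA h mxE /dot; by apply: eq_bigr => i _; rewrite mxE mulrC.
Qed.

Lemma schur_id k (M : 'M[R]_k.+1) x : M^T = M -> lead M \in unitmx ->
  qf M x = qf (lead M) (res x + x ord_max 0 *: (invmx (lead M) *m lcol M))
     + (M ord_max ord_max - dot (lcol M) (invmx (lead M) *m lcol M)) * x ord_max 0 ^+ 2.
Proof.
move=> sM uA; set w := invmx _ *m _; set u := x ord_max 0.
have Aw : lead M *m w = lcol M by rewrite /w mulKVmx.
rewrite decomp // qf_add ?lead_sym // bl_scale qf_scale (bl_dot _ Aw).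
have -> : qf (lead M) w = dot (lcol M) w by rewrite -(bl_dot _ Aw).
rewrite /u; ring.
Qed.

Lemma det_schur k (M : 'M[R]_k.+1) : M^T = M -> lead M \in unitmx ->
  \det M = (M ord_max ord_max - dot (lcol M) (invmx (lead M) *m lcol M)) * \det (lead M).
Proof.
move=> sM uA; set w := invmx _ *m _.
have Aw : lead M *m w = lcol M by rewrite /w mulKVmx.
have sy i j : M i j = M j i by rewrite -{1}sM mxE.
set B := setlast M (dot (lcol M) w).
have dB : \det B = 0.
  pose v := ext w (-1).
  have Bv : B *m v = 0.
    apply/matrixP => i j; rewrite /B (ord1 j) !mxE big_ord_recr /= ext_max.
    under eq_bigr do rewrite ext_wid.
    case: (unliftP ord_max i) => [i' ->|->].
      rewrite lift_wid !mxE wid_neq /=.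
      have := congr1 (fun X : 'cV[R]_k => X i' 0) Aw; rewrite !mxE => <-.
      apply/eqP; rewrite mulrN1 subr_eq0; apply/eqP.
      by apply: eq_bigr => j0 _; rewrite !mxE wid_neq.
    rewrite [setlast _ _ _ ord_max]mxE !eqxx /= mulrN1 /dot; apply/eqP; rewrite subr_eq0; apply/eqP.
    by apply: eq_bigr => j0 _; rewrite [setlast _ _ _ _]mxE [lcol _ _ _]mxE wid_neq andbF /= sy.
  apply/eqP; apply: contraT => nz.
  have uB : B \in unitmx by rewrite unitmxE unitfE.
  have : v = 0 by rewrite -(mulKmx uB v) Bv mulmx0.
  move/matrixP/(_ ord_max 0); rewrite ext_max mxE => /eqP; rewrite oppr_eq0 oner_eq0.
  by [].
have := det_setlast M (dot (lcol M) w); rewrite -/B dB => /eqP.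
by rewrite eq_sym addr_eq0 => /eqP ->; ring.
Qed.

Lemma ext_eq0 k (y : 'cV[R]_k) u : (ext y u == 0) = (y == 0) && (u == 0).
Proof.
apply/eqP/andP => [h|[/eqP -> /eqP ->]].
  split; apply/eqP.
    by rewrite -(res_ext y u) h; apply/matrixP => i j; rewrite !mxE.
  by rewrite -(ext_max y u) h mxE.
by apply/matrixP => i j; rewrite !mxE; case: unlift => [?|]; rewrite ?mxE.
Qed.

Lemma pd_ge0 k (M : 'M[R]_k) x : pd M -> 0 <= qf M x.
Proof.
move=> h; have [->|nz] := eqVneq x 0; first by rewrite qf0.
by apply: ltW; apply: h.
Qed.

Lemma pd_lead k (M : 'M[R]_k.+1) : M^T = M -> pd M -> pd (lead M).
Proof.
move=> sM h y nz; have := h (ext y 0); rewrite decomp // res_ext ext_max.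
rewrite ext_eq0 (negbTE nz) /= => /(_ isT).
by rewrite expr0n /= !mulr0 mul0r !addr0.
Qed.

Lemma pd_det k (M : 'M[R]_k) : M^T = M -> pd M -> 0 < \det M.
Proof.
elim: k M => [|k IH] M sM h; first by rewrite det_mx00.
have dA := IH _ (lead_sym sM) (pd_lead sM h).
have uA : lead M \in unitmx by rewrite unitmxE unitfE gt_eqF.
rewrite det_schur // pmulr_lgt0 //.
set w := invmx _ *m _.
have := h (ext (- w) 1); rewrite (schur_id _ sM uA) res_ext ext_max.
rewrite ext_eq0 oner_eq0 andbF => /(_ isT).
by rewrite scale1r addNr qf0 add0r expr1n mulr1.
Qed.

Lemma schur k (M : 'M[R]_k.+1) : M^T = M -> pd (lead M) -> 0 < \det M -> pd M.
Proof.
move=> sM hA dM.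
have dA := pd_det (lead_sym sM) hA.
have uA : lead M \in unitmx by rewrite unitmxE unitfE gt_eqF.
move: dM; rewrite det_schur // pmulr_lgt0 // => hd x nz.
rewrite schur_id //.
have [u0|u0] := eqVneq (x ord_max 0) 0.
  rewrite u0 scale0r addr0 expr0n /= mulr0 addr0; apply: hA.
  by apply: contra nz => /eqP r0; rewrite [x]ext_res r0 u0 ext_eq0 !eqxx.
apply: ltr_wpDl; first exact: pd_ge0.
by apply: mulr_gt0 => //; rewrite lt_def sqrf_eq0 u0 sqr_ge0.
Qed.
End Real.

Definition RR := Rdefinitions.R.
Definition RM k (C : 'M[int]_k) : 'M[RR]_k := map_mx (fun z : int => (z%:~R : RR)) C.

Lemma RME k (C : 'M[int]_k) i j : RM C i j = (C i j)%:~R.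
Proof. by rewrite mxE. Qed.
Lemma RM_lead k (C : 'M[int]_k.+1) : RM (lead C) = lead (RM C).
Proof. by apply/matrixP => i j; rewrite !mxE. Qed.
Lemma RM_det k (C : 'M[int]_k) : \det (RM C) = (\det C)%:~R.
Proof. by rewrite (det_map_mx (intr : {rmorphism int -> RR})). Qed.
Lemma RM_sym k (C : 'M[int]_k) : C^T = C -> (RM C)^T = RM C.
Proof. by move=> h; rewrite /RM map_trmx h. Qed.

Lemma Mval (T : Type) k (E : 'M[T]_k) (i j i' j' : 'I_k) :
  (i : nat) = i' -> (j : nat) = j' -> E i j = E i' j'.
Proof. by move=> /val_inj-> /val_inj->. Qed.

Definition idx k (i : 'I_k.+2) : 'I_k.+1 := inord (minn i k).
Lemma idxE k (i : 'I_k.+2) : (idx i : nat) = minn i k.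
Proof. by rewrite /idx inordK // ltnS geq_minr. Qed.

Definition extF k (E : 'M[int]_k.+1) : 'M[int]_k.+2 :=
  \matrix_(i, j) if (((i : nat) == k.+1) && ((j : nat) == k)) || (((i : nat) == k) && ((j : nat) == k.+1))
                 then 3 else E (idx i) (idx j).

Lemma tildeE k (E : 'M[int]_k.+1) i j :
  tilde E i j = if ((i : nat) == k) && ((j : nat) == k) then 3 else E i j.
Proof. by rewrite mxE. Qed.

Lemma lead_extF k (E : 'M[int]_k.+1) : lead (extF E) = E.
Proof.
apply/matrixP => i j; rewrite !mxE /=.
have hi := ltn_ord i; have hj := ltn_ord j.
rewrite ifF; last by apply/negbTE; rewrite negb_or !negb_and; apply/andP; split; lia.
by apply: Mval; rewrite idxE /=; lia.
Qed.

Lemma dot_recr k (v y : 'cV[RR]_k.+1) :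
  dot v y = dot (res v) (res y) + v ord_max 0 * y ord_max 0.
Proof. by rewrite /dot big_ord_recr /=; congr (_ + _); apply: eq_bigr => i _; rewrite !mxE. Qed.

Lemma lead_setlast (R : comRingType) k (M : 'M[R]_k.+1) c : lead (setlast M c) = lead M.
Proof. by apply/matrixP => i j; rewrite !mxE wid_neq. Qed.
Lemma lcol_setlast k (M : 'M[RR]_k.+1) c : lcol (setlast M c) = lcol M.
Proof. by apply/matrixP => i j; rewrite !mxE wid_neq. Qed.
Lemma setlast_max (R : comRingType) k (M : 'M[R]_k.+1) c : setlast M c ord_max ord_max = c.
Proof. by rewrite mxE !eqxx. Qed.
Lemma setlast_sym (R : comRingType) k (M : 'M[R]_k.+1) c : M^T = M -> (setlast M c)^T = setlast M c.
Proof. by move=> sM; apply/matrixP => i j; rewrite !mxE andbC -{1}sM mxE. Qed.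

Lemma tilde_setlast k (E : 'M[int]_k.+1) : tilde E = setlast E 3.
Proof. by apply/matrixP => i j; rewrite !mxE. Qed.
Lemma RM_setlast k (E : 'M[int]_k.+1) c : RM (setlast E c) = setlast (RM E) c%:~R.
Proof. by apply/matrixP => i j; rewrite !mxE; case: ifP. Qed.

Lemma extF_sym k (E : 'M[int]_k.+1) : E^T = E -> (extF E)^T = extF E.
Proof.
move=> sE; have sy a b : E a b = E b a by rewrite -{1}sE mxE.
apply/matrixP => i j; rewrite !mxE sy; congr (if _ then _ else _).
by apply/idP/idP; lia.
Qed.

Lemma extF_max k (E : 'M[int]_k.+1) : extF E ord_max ord_max = E ord_max ord_max.
Proof.
rewrite mxE /= ifF; last by apply/negbTE; rewrite negb_or !negb_and; apply/andP; split; lia.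
by apply: Mval; rewrite idxE /=; lia.
Qed.

Lemma res_lcol_extF k (E : 'M[int]_k.+1) : res (lcol (RM (extF E))) = lcol (RM E).
Proof.
apply/matrixP => i j; rewrite !mxE /=; have hi := ltn_ord i.
rewrite ifF; last by apply/negbTE; rewrite negb_or !negb_and; apply/andP; split; lia.
by congr intr; apply: Mval; rewrite idxE /=; lia.
Qed.

Lemma lcol_extF_max k (E : 'M[int]_k.+1) : lcol (RM (extF E)) ord_max 0 = 3%:~R.
Proof. by rewrite !mxE /= !eqxx orbT. Qed.

Lemma pd_extF k (E : 'M[int]_k.+1) (n : int) : E^T = E -> pd (RM E) ->
  E ord_max ord_max = n -> 3 < n -> 0 < \det (tilde E) -> pd (RM (extF E)).
Proof.
move=> sE pE En n3 dT x nz.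
set F := RM (extF E).
have sF : F^T = F by rewrite RM_sym // extF_sym.
have sRE := RM_sym sE.
set T := RM (tilde E).
have eT : T = setlast (RM E) 3%:~R by rewrite /T tilde_setlast RM_setlast.
have sT : T^T = T by rewrite eT setlast_sym.
have pT : pd T.
  apply: schur => //; first by rewrite eT lead_setlast; apply: pd_lead.
  by rewrite /T RM_det ltr0z.
set y := res (res x); set s := res x ord_max 0; set t := x ord_max 0.
set z := ext y (s + t).
set A := lead (RM E); set a := lcol (RM E).
have nR : (RM E) ord_max ord_max = n%:~R by rewrite mxE En.
have e1 : qf F x = qf (RM E) (res x) + 2 * t * (dot a y + 3%:~R * s) + n%:~R * t ^+ 2.
  rewrite decomp // /F -RM_lead lead_extF dot_recr res_lcol_extF lcol_extF_max.
  by rewrite RME extF_max En /s mxE.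
have e2 : qf (RM E) (res x) = qf A y + 2 * s * dot a y + n%:~R * s ^+ 2.
  by rewrite decomp // nR.
have e3 : qf (RM E) z = qf A y + 2 * (s + t) * dot a y + n%:~R * (s + t) ^+ 2.
  by rewrite decomp // nR res_ext ext_max.
have e4 : qf T z = qf A y + 2 * (s + t) * dot a y + 3%:~R * (s + t) ^+ 2.
  by rewrite decomp // res_ext ext_max eT lead_setlast lcol_setlast setlast_max.
have key : 2 * qf F x = qf (RM E) z + qf T z + (n%:~R - 3%:~R) * (s - t) ^+ 2.
  rewrite e1 e2 e3 e4; ring.
have n3R : 3%:~R < n%:~R :> RR by rewrite ltr_int.
suff : 0 < 2 * qf F x by rewrite pmulr_rgt0.
rewrite key.
have h3 : 0 <= (n%:~R - 3%:~R) * (s - t) ^+ 2 :> RR.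
  by rewrite mulr_ge0 // ?sqr_ge0 // subr_ge0 ltW.
have [z0|z0] := eqVneq z 0.
  rewrite z0 !qf0 !add0r.
  move/eqP: z0; rewrite /z ext_eq0 => /andP[/eqP y0 /eqP st0].
  have tnz : t != 0.
    apply: contra nz => /eqP t0.
    rewrite [x]ext_res [res x]ext_res -/y -/s -/t y0 t0.
    have -> : s = 0 by move: st0; rewrite t0 addr0.
    by rewrite !ext_eq0 !eqxx.
  apply: mulr_gt0; first by rewrite subr_gt0.
  rewrite lt_def sqrf_eq0 sqr_ge0 andbT.
  apply/eqP => h; apply/(negP tnz)/eqP; lra.
have := pE z z0; have := pT z z0; lra.
Qed.

Definition rowset (R : Type) m (M : 'M[R]_m) i (v : 'rV[R]_m) : 'M[R]_m :=
  \matrix_(a, b) if a == i then v 0 b else M a b.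
Lemma row_rowset (R : Type) m (M : 'M[R]_m) i v : row i (rowset M i v) = v.
Proof. by apply/matrixP => a b; rewrite !mxE eqxx (ord1 a). Qed.
Lemma row'_rowset (R : Type) m (M : 'M[R]_m) i v : row' i (rowset M i v) = row' i M.
Proof. by apply/matrixP => a b; rewrite !mxE ifF //; apply/negbTE; rewrite eq_sym neq_lift. Qed.

Lemma det_extF k (E : 'M[int]_k.+1) n : E ord_max ord_max = n ->
  \det (extF E) = (n - 3) * (\det E + \det (tilde E)).
Proof.
move=> En.
set F := extF E.
pose kk : 'I_k.+2 := wid ord_max.
pose ll : 'I_k.+2 := ord_max.
have nkl : ll != kk by rewrite eq_sym /kk wid_neq.
pose B := rowset F ll (row kk F).
pose C := rowset F ll (delta_mx 0 ll - delta_mx 0 kk).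
rewrite (@determinant_multilinear _ _ F B C ll 1 (n - 3)); last first.
- by rewrite row'_rowset.
- by rewrite row'_rowset.
- rewrite !row_rowset; apply/matrixP => i j; rewrite !mxE /=.
  have hll : (j == ll) = ((j : nat) == k.+1) by [].
  have hkk : (j == kk) = ((j : nat) == k) by [].
  have h1 : (k.+1 == k) = false by lia.
  have h2 : (k == k.+1) = false by lia.
  rewrite (ord1 i) eqxx /= hll hkk !eqxx h1 h2 /= mul1r.
  have hj := ltn_ord j.
  have idl : E (idx ll) (idx j) = E (idx kk) (idx j) by apply: Mval; rewrite !idxE /=; lia.
  case: (ltngtP j k) => hjk.
  + try (have -> : ((j : nat) == k) = false by lia).
    try (have -> : ((j : nat) == k.+1) = false by lia).
    by rewrite /= idl; ring.
  + try (have -> : ((j : nat) == k) = false by lia).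
    try (have -> : ((j : nat) == k.+1) = true by lia).
    have -> : E (idx ll) (idx j) = n by rewrite -En; apply: Mval; rewrite !idxE /=; lia.
    rewrite /=; ring.
  + try (have -> : ((j : nat) == k) = true by lia).
    try (have -> : ((j : nat) == k.+1) = false by lia).
    have -> : E (idx kk) (idx j) = n by rewrite -En; apply: Mval; rewrite !idxE /=; lia.
    rewrite /=; ring.
have dB : \det B = 0.
  apply: (determinant_alternate nkl) => j.
  by rewrite !mxE eqxx; case: (kk == ll).
pose H1 := rowset F ll (delta_mx 0 ll).
pose H2 := rowset F ll (delta_mx 0 kk).
have dC : \det C = 1 * \det H1 + (-1) * \det H2.
  apply: (@determinant_multilinear _ _ C H1 H2 ll); rewrite ?row'_rowset //.
  by rewrite !row_rowset scale1r scaleN1r.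
have dH1 : \det H1 = \det E.
  rewrite (@det_rowdelta _ _ H1 ll ll) ?row_rowset // cof_max.
  by rewrite -[in RHS](lead_extF E); congr (\det _); apply/matrixP => i j; rewrite !mxE wid_neq.
have dH2 : \det H2 = - \det (tilde E).
  rewrite (@det_rowdelta _ _ H2 ll kk) ?row_rowset // /cofactor.
  have e : ((ll : nat) + kk = (k + k).+1)%N by rewrite /= addSn.
  have -> : (-1) ^+ (ll + kk) = -1 :> int by rewrite -signr_odd e /= addnn odd_double.
  rewrite mulN1r; congr (- \det _).
  apply/matrixP => i j; change 'I_k.+1 in i; change 'I_k.+1 in j; rewrite !mxE liftm_neq.
  have li : (lift ll i : nat) = i by exact: lift_max.
  have hi : (i < k.+1)%N := ltn_ord i; have hj : (j < k.+1)%N := ltn_ord j.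
  have lj : (lift kk j : nat) = if (j : nat) == k then k.+1 else j.
    rewrite /= /bump; case: eqP => h; first by rewrite h leqnn.
    have -> : (k <= j)%N = false.
      by apply/negbTE; rewrite -ltnNge ltn_neqAle -ltnS hj andbT; apply/eqP.
    by [].
  rewrite li lj /=; have [jk|jk] := eqVneq (j : nat) k.
    rewrite eqxx (gtn_eqF (ltnSn k)) /= andbF andbT /=.
    case: ifP => // _; apply: Mval; first by rewrite idxE li; apply/minn_idPl; rewrite -ltnS.
    by rewrite idxE lj jk eqxx; apply/minn_idPr; exact: leqnSn.
  rewrite (ltn_eqF hj) (ltn_eqF hi) /= !andbF /=.
  apply: Mval; first by rewrite idxE li; apply/minn_idPl; rewrite -ltnS.
  by rewrite idxE lj (negbTE jk); apply/minn_idPl; rewrite -ltnS.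
rewrite dB dC dH1 dH2; ring.
Qed.

Lemma bl_delta k (M : 'M[RR]_k) i j : bl M (delta_mx i 0) (delta_mx j 0) = M i j.
Proof. by rewrite /bl trmx_delta -rowE -colE !mxE. Qed.

Lemma posdef_pd k (C : 'M[int]_k) : posdef C -> pd (RM C).
Proof. by []. Qed.

Lemma entry_bound (n : int) k (C : 'M[int]_k) : 0 < n -> in_frakC n C ->
  forall i j, `|C i j| <= n.
Proof.
move=> n0 [sC pC dC _] i j.
have [->|nij] := eqVneq i j; first by rewrite dC ger0_norm // ltW.
have sR := RM_sym sC.
have key (s : RR) : s ^+ 2 = 1 -> 0 < 2 * n%:~R + 2 * s * (C i j)%:~R.
  move=> s2.
  have := pC (delta_mx i 0 + s *: delta_mx j 0).
  rewrite -/(qf (RM C) _) qf_add // qf_scale bl_scale /qf -!/(bl _ _ _) !bl_delta !RME !dC s2.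
  have -> : delta_mx i 0 + s *: delta_mx j 0 != 0 :> 'cV[RR]_k.
    apply/eqP => /matrixP /(_ i 0); rewrite !mxE !eqxx (negbTE nij) /= mulr0 addr0.
    by move/eqP; rewrite oner_eq0.
  move=> /(_ isT) h; lra.
have h1 := key 1 (expr1n _ _).
have h2 : 0 < 2 * n%:~R + 2 * (-1) * (C i j)%:~R :> RR by apply: key; rewrite sqrrN expr1n.
have a1 : (C i j)%:~R < n%:~R :> RR by lra.
have a2 : - n%:~R < (C i j)%:~R :> RR by lra.
rewrite ler_norml; apply/andP; split; apply: ltW.
  by rewrite -(ltr_int RR) rmorphN.
by rewrite -(ltr_int RR).
Qed.

Lemma det_bound (n : int) k (C : 'M[int]_k) : (forall i j, `|C i j| <= n) ->
  `|\det C| <= \sum_(s : 'S_k) n ^+ k.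
Proof.
move=> hb; rewrite /determinant; apply: le_trans (ler_norm_sum _ _ _) _.
apply: ler_sum => s _; rewrite normrM normr_sign mul1r normr_prod.
have -> : n ^+ k = \prod_(i < k) n by rewrite prodr_const card_ord.
apply: ler_prod => i _; rewrite normr_ge0 /=; exact: hb.
Qed.

Lemma ex_max (P : nat -> Prop) B : (exists t, P t) -> (forall t, P t -> (t <= B)%N) ->
  exists t, P t /\ forall t', P t' -> (t' <= t)%N.
Proof.
elim: B => [|B IH] [t Pt] hB.
  by exists t; split => // t' Pt'; have := hB _ Pt'; have := hB _ Pt; rewrite !leqn0 => /eqP -> /eqP ->.
have [PB|nPB] := Classical_Prop.classic (P B.+1).
  by exists B.+1; split.
apply: IH; first by exists t.
move=> t' Pt'; have := hB _ Pt'; rewrite leq_eqVlt => /orP[/eqP e|//].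
by rewrite e in Pt'.
Qed.

Section Main.
Variables (n : int) (r : nat) (Mr : 'M[int]_r).
Hypotheses (n3 : (n = 3 %[mod 4])%Z) (n_gt3 : 3 < n).

Lemma frak_det k (C : 'M[int]_k) : in_frakC n C -> 0 < \det C.
Proof.
case=> sC pC _ _; have := pd_det (RM_sym sC) (posdef_pd pC).
by rewrite RM_det ltr0z.
Qed.

Lemma frak_extF k (E : 'M[int]_k.+1) : in_frakE n Mr E -> (r <= k.+1)%N ->
  0 < \det (tilde E) -> in_frakE n Mr (extF E).
Proof.
move=> [[sE pE dE cE] lE] rk dT; split; first split.
- exact: extF_sym.
- by apply: pd_extF => //; exact: posdef_pd.
- move=> i; rewrite mxE ifF; last by apply/negbTE; rewrite negb_or !negb_and; apply/andP; split; lia.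
  by rewrite -(dE (idx i)).
- move=> i j; rewrite mxE; case: ifP => _ //; exact: esym n3.
- move=> i j i' j' ei ej; rewrite mxE.
  have hi := ltn_ord i; have hj := ltn_ord j.
  rewrite ifF; last by apply/negbTE; rewrite negb_or !negb_and; apply/andP; split; lia.
  by apply: lE; rewrite idxE; lia.
Qed.

Lemma frak_lead k (X : 'M[int]_k.+1) : in_frakE n Mr X -> (r <= k)%N -> in_frakE n Mr (lead X).
Proof.
move=> [[sX pX dX cX] lX] rk; split; first split.
- by apply/matrixP => i j; rewrite !mxE -{1}sX mxE.
- change (pd (RM (lead X))); rewrite RM_lead; apply: pd_lead; [exact: RM_sym | exact: posdef_pd].
- by move=> i; rewrite mxE.
- by move=> i j; rewrite mxE.
- by move=> i j i' j' ei ej; rewrite mxE; apply: lX.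
Qed.

Lemma frak_r (X : 'M[int]_r) : in_frakE n Mr X -> X = Mr.
Proof. by move=> [_ lX]; apply/matrixP => i j; apply: lX. Qed.

Lemma det_tildeE k (X : 'M[int]_k.+1) : X ord_max ord_max = n ->
  \det (tilde X) = \det X - (n - 3) * \det (lead X).
Proof. by move=> h; rewrite tilde_setlast det_setlast h; ring. Qed.

Lemma maxk k : (exists E : 'M[int]_k, in_frakE n Mr E) ->
  exists Em : 'M[int]_k, in_frakE n Mr Em /\ forall E : 'M[int]_k, in_frakE n Mr E -> \det E <= \det Em.
Proof.
move=> [E0 hE0].
pose D : int := \sum_(s : 'S_k) n ^+ k.
pose P t := exists E : 'M[int]_k, in_frakE n Mr E /\ \det E = t%:Z.
have n0 : 0 < n by apply: lt_trans n_gt3.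
have [t [[Em [hEm eEm]] mx]] : exists t, P t /\ forall t', P t' -> (t' <= t)%N.
  apply: (@ex_max P `|D|%N).
    exists `|\det E0|%N, E0; split => //.
    by rewrite gez0_abs // ltW // frak_det //; case: hE0.
  move=> t [E [hE eE]]; rewrite -lez_nat -eE abszE.
  apply: le_trans (ler_norm _) _; apply: le_trans (det_bound (entry_bound n0 hE.1)) _.
  exact: ler_norm.
exists Em; split => // E hE; rewrite eEm.
have dE := frak_det hE.1.
have hP : P `|\det E|%N by exists E; split => //; rewrite gez0_abs // ltW.
by have := mx _ hP; rewrite -lez_nat gez0_abs // ltW.
Qed.

End Main.

Lemma base_claim (n : int) k (Mr : 'M[int]_k.+1) : in_frakC n Mr -> 0 < \det (tilde Mr) ->
  exists Em : 'M[int]_k.+1, [/\ in_frakE n Mr Em,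
     (forall E : 'M[int]_k.+1, in_frakE n Mr E -> \det E <= \det Em) & 0 < \det (tilde Em)].
Proof.
move=> hC dT; exists Mr; split => //.
  by split => // i j i' j' ei ej; apply: Mval.
by move=> E hE; rewrite (frak_r hE).
Qed.

Lemma claim (n : int) (n3 : (n = 3 %[mod 4])%Z) (n_gt3 : 3 < n) k :
  forall r (Mr : 'M[int]_r), in_frakC n Mr -> 0 < \det (tilde Mr) -> (1 <= r)%N -> (r <= k.+1)%N ->
  exists Em : 'M[int]_k.+1, [/\ in_frakE n Mr Em,
     (forall E : 'M[int]_k.+1, in_frakE n Mr E -> \det E <= \det Em) & 0 < \det (tilde Em)].
Proof.
elim: k => [|k IH] r Mr hC dT r1 rk.
  have e : r = 1%N by apply/eqP; rewrite eqn_leq rk r1.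
  by subst r; apply: base_claim.
have [e|rk'] := eqVneq r k.+2; first by subst r; apply: base_claim.
have rk1 : (r <= k.+1)%N by rewrite -ltnS ltn_neqAle rk' rk.
have [Ek [hEk mEk dTk]] := IH r Mr hC dT r1 rk1.
have hF := frak_extF n3 n_gt3 hEk rk1 dTk.
have [Em [hEm mEm]] := maxk n_gt3 (ex_intro _ _ hF).
exists Em; split => //.
have nEk : Ek ord_max ord_max = n by case: hEk => -[_ _ d _] _.
have nEm : Em ord_max ord_max = n by case: hEm => -[_ _ d _] _.
rewrite (det_tildeE nEm).
have hL := frak_lead hEm rk1.
have l1 := mEk _ hL.
have l2 := mEm _ hF; rewrite (det_extF nEk) in l2.
have a0 : 0 < n - 3 by rewrite subr_gt0.
have l3 : (n - 3) * \det (lead Em) <= (n - 3) * \det Ek by apply: ler_wpM2l => //; apply: ltW.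
have l4 : 0 < (n - 3) * \det (tilde Ek) by apply: mulr_gt0.
rewrite mulrDr in l2.
lra.
Qed.

Unset Implicit Arguments.
Theorem theorem7 (n : int) (r m : nat) (Mr : 'M[int]_r) :
  (n = 3 %[mod 4])%Z -> 3 < n ->
  (1 <= r)%N -> (r < m)%N ->
  in_frakC n Mr -> 0 < \det (tilde Mr) ->
  (exists E' : 'M[int]_(m.-1), in_frakE n Mr E') /\
  (exists E : 'M[int]_m, in_frakE n Mr E /\
     forall E' : 'M[int]_(m.-1), in_frakE n Mr E' -> (n - 3) * \det E' < \det E).
Proof.
move=> n3 n_gt3 r1 rm hC dT.
case: m rm => [|m] rm; first by [].
case: m rm => [|k] rm; first by lia.
have rk : (r <= k.+1)%N by [].
have [Ek [hEk mEk dTk]] := claim n3 n_gt3 hC dT r1 rk.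
split; first by exists Ek.
exists (extF Ek); split; first exact: frak_extF.
move=> E' hE'.
have nEk : Ek ord_max ord_max = n by case: hEk => -[_ _ d _] _.
rewrite (det_extF nEk) mulrDr.
have a0 : 0 < n - 3 by rewrite subr_gt0.
have l3 : (n - 3) * \det E' <= (n - 3) * \det Ek by apply: ler_wpM2l => //; [apply: ltW | apply: mEk].
have l4 : 0 < (n - 3) * \det (tilde Ek) by apply: mulr_gt0.
lra.
Qed.
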